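(* Let $W$ be a channel from finite $\mathcal X$ to finite $\mathcal Y$ and $W'$ a channel from finite $\mathcal X'$ to finite $\mathcal Y'$, and let $W\times W'$ be the product channel from $\mathcal X\times\mathcal X'$ to $\mathcal Y\times\mathcal Y'$, $(W\times W')_{x,x'}(y,y')=W_x(y)W'_{x'}(y')$. Then \[ V^+_{W\times W'}=V^+_W+V^+_{W'},\qquad V^-_{W\times W'}=V^-_W+V^-_{W'}. \]
   Context: For a channel $W$ (a family of distributions $W_x$ on the output set) and an input distribution $P$: $W_P=\sum_xP(x)W_x$, $D$ is relative entropy (natural log), $I(P,W)=\sum_xP(x)D(W_x\|W_P)$, $C_W=\max_PI(P,W)$, $V_{P,W}=\sum_xP(x)\sum_yW_x(y)\big(\log\frac{W_x(y)}{W_P(y)}-D(W_x\|W_P)\big)^2$, $\mathcal V_W=\{P:I(P,W)=C_W\}$, $V^+_W=\max_{P\in\mathcal V_W}V_{P,W}$, $V^-_W=\min_{P\in\mathcal V_W}V_{P,W}$. *)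

(* Defs.v *)
From Stdlib Require Import Reals ClassicalEpsilon.
From HB Require Import structures.
From mathcomp Require Import all_boot.

Set Implicit Arguments. Unset Strict Implicit. Unset Printing Implicit Defensive.

Open Scope R_scope.

HB.instance Definition _ :=
  Monoid.isComLaw.Build R 0 Rplus
    (fun a b c => Logic.eq_sym (Rplus_assoc a b c)) Rplus_comm Rplus_0_l.

Definition rsum (T : finType) (f : T -> R) : R := \big[Rplus/0]_(t : T) f t.

Definition is_dist (T : finType) (P : T -> R) : Prop :=
  (forall t, 0 <= P t) /\ rsum P = 1.

Definition is_channel (X Y : finType) (W : X -> Y -> R) : Prop :=
  forall x, is_dist (W x).

Definition prod_channel (X Y X' Y' : finType) (W : X -> Y -> R)
  (W' : X' -> Y' -> R) : (X * X')%type -> (Y * Y')%type -> R :=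
  fun a b => W a.1 b.1 * W' a.2 b.2.

Definition outd (X Y : finType) (P : X -> R) (W : X -> Y -> R) : Y -> R :=
  fun y => rsum (fun x => P x * W x y).

(* relative entropy, natural log; terms with p y = 0 vanish (0 log 0 = 0) *)
Definition relent (Y : finType) (p q : Y -> R) : R :=
  rsum (fun y => p y * ln (p y / q y)).

Definition mutinf (X Y : finType) (P : X -> R) (W : X -> Y -> R) : R :=
  rsum (fun x => P x * relent (W x) (outd P W)).

Definition dispersion (X Y : finType) (P : X -> R) (W : X -> Y -> R) : R :=
  rsum (fun x => P x * rsum (fun y =>
     W x y * (ln (W x y / outd P W y) - relent (W x) (outd P W)) ^ 2)).

Definition is_max (S : R -> Prop) (m : R) : Prop := S m /\ forall s, S s -> s <= m.
Definition is_min (S : R -> Prop) (m : R) : Prop := S m /\ forall s, S s -> m <= s.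

Definition capacity (X Y : finType) (W : X -> Y -> R) : R :=
  epsilon (inhabits 0)
    (is_max (fun c => exists P : X -> R, is_dist P /\ c = mutinf P W)).

Definition cap_achieving (X Y : finType) (W : X -> Y -> R) (P : X -> R) : Prop :=
  is_dist P /\ mutinf P W = capacity W.

Definition Vplus (X Y : finType) (W : X -> Y -> R) : R :=
  epsilon (inhabits 0)
    (is_max (fun v => exists P : X -> R, cap_achieving W P /\ v = dispersion P W)).
Definition Vminus (X Y : finType) (W : X -> Y -> R) : R :=
  epsilon (inhabits 0)
    (is_min (fun v => exists P : X -> R, cap_achieving W P /\ v = dispersion P W)).

(* Main.v *)
Require Import Defs.
From Stdlib Require Import Reals.
From mathcomp Require Import all_boot.
Open Scope R_scope.
From Stdlib Require Import Lra Lia ClassicalEpsilon Classical FunctionalExtensionality.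
From HB Require Import structures.
Set Implicit Arguments. Unset Strict Implicit. Unset Printing Implicit Defensive.

Section Sums.
Variable T : finType.

Lemma rsum_ext (f g : T -> R) : (forall t, f t = g t) -> rsum f = rsum g.
Proof. by move=> H; rewrite /rsum; apply: eq_bigr => t _; apply: H. Qed.

Lemma rsum_add (f g : T -> R) : rsum (fun t => f t + g t) = rsum f + rsum g.
Proof. by rewrite /rsum big_split. Qed.

Lemma rsum_scal (c : R) (f : T -> R) : rsum (fun t => c * f t) = c * rsum f.
Proof.
rewrite /rsum; elim: (index_enum T) => [|a l IH]; rewrite ?big_nil ?big_cons.
  by rewrite Rmult_0_r.
by rewrite IH Rmult_plus_distr_l.
Qed.

Lemma rsum_opp (f : T -> R) : rsum (fun t => - f t) = - rsum f.
Proof.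
rewrite /rsum; elim: (index_enum T) => [|a l IH]; rewrite ?big_nil ?big_cons.
  by rewrite Ropp_0.
by rewrite IH Ropp_plus_distr.
Qed.

Lemma rsum_sub (f g : T -> R) : rsum (fun t => f t - g t) = rsum f - rsum g.
Proof. by rewrite /Rminus -rsum_opp -rsum_add. Qed.

Lemma rsum0 : rsum (fun _ : T => 0) = 0.
Proof. by rewrite /rsum big1. Qed.

Lemma rsum_ge0 (f : T -> R) : (forall t, 0 <= f t) -> 0 <= rsum f.
Proof.
move=> H; rewrite /rsum; elim: (index_enum T) => [|a l IH]; rewrite ?big_nil ?big_cons.
  by right.
by have := H a; lra.
Qed.

Lemma rsum_le (f g : T -> R) : (forall t, f t <= g t) -> rsum f <= rsum g.
Proof.
move=> H; have : 0 <= rsum (fun t => g t - f t) by apply: rsum_ge0 => t; have := H t; lra.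
rewrite rsum_sub; lra.
Qed.

Lemma rsum_term (f : T -> R) t : (forall t, 0 <= f t) -> f t <= rsum f.
Proof.
move=> H; rewrite /rsum (bigD1 t) //=.
have : 0 <= \big[Rplus/0]_(i | i != t) f i.
  by apply: (big_ind (fun x => 0 <= x)) => //; [right|move=> *; lra].
lra.
Qed.

Lemma rsum_lt (f g : T -> R) t : (forall t, f t <= g t) -> f t < g t -> rsum f < rsum g.
Proof.
move=> H Ht.
have : f t - g t + rsum (fun s => g s - f s) >= 0.
  have := @rsum_term (fun s => g s - f s) t; move=> /(_ _) H2.
  suff: g t - f t <= rsum (fun s => g s - f s) by lra.
  by apply: H2 => s; have := H s; lra.
rewrite rsum_sub; lra.
Qed.

Lemma rsum_eq0 (f : T -> R) t : (forall t, 0 <= f t) -> rsum f = 0 -> f t = 0.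
Proof. move=> H H0; have := rsum_term t H; have := H t; lra. Qed.

Lemma rsum_delta (t0 : T) (c : R) :
  rsum (fun t => if t == t0 then c else 0) = c.
Proof.
rewrite /rsum (bigD1 t0) //= eqxx big1 ?Rplus_0_r //.
by move=> i /negbTE ->.
Qed.

Lemma cv_ext (u v : nat -> R) l : (forall n, u n = v n) -> Un_cv u l -> Un_cv v l.
Proof. by move=> H h e he; case: (h e he) => N HN; exists N => n Hn; rewrite -H; apply: HN. Qed.

Lemma rsum_cv (F : nat -> T -> R) (G : T -> R) :
  (forall t, Un_cv (fun k => F k t) (G t)) ->
  Un_cv (fun k => rsum (F k)) (rsum G).
Proof.
move=> H; rewrite /rsum; elim: (index_enum T) => [|a l IH].
  rewrite big_nil; apply: (@cv_ext (fun _ => 0)) => [n|]; first by rewrite big_nil.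
  by move=> e he; exists 0%nat => n _; rewrite /R_dist Rminus_0_r Rabs_R0.
rewrite big_cons; apply: (@cv_ext (fun k => F k a + \big[Rplus/0]_(j <- l) F k j)) => [n|].
  by rewrite big_cons.
by apply: CV_plus.
Qed.

End Sums.

Lemma rsum_exchange (A B : finType) (F : A -> B -> R) :
  rsum (fun a => rsum (fun b => F a b)) = rsum (fun b => rsum (fun a => F a b)).
Proof. by rewrite /rsum exchange_big. Qed.

Lemma rsum_pair (A B : finType) (F : (A * B)%type -> R) :
  rsum F = rsum (fun a => rsum (fun b => F (a, b))).
Proof. by rewrite /rsum pair_big; apply: eq_bigr => -[a b]. Qed.

Definition ent (t : R) : R := t * ln t.

Lemma ln_le x : 0 < x -> ln x <= x - 1.
Proof. move=> hx; have := exp_ineq1_le (ln x); rewrite exp_ln //; lra. Qed.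

Lemma ln_sqrt x : 0 < x -> ln x = 2 * ln (sqrt x).
Proof.
move=> hx; have hs : 0 < sqrt x by apply: sqrt_lt_R0.
by rewrite -{1}(sqrt_sqrt x); [rewrite ln_mult //; ring | lra].
Qed.

Lemma ln_lt x : 0 < x -> x <> 1 -> ln x < x - 1.
Proof.
move=> hx h1; have hs : 0 < sqrt x by apply: sqrt_lt_R0.
have hs1 : sqrt x <> 1.
  by move=> e; apply: h1; rewrite -(sqrt_sqrt x); [rewrite e; ring|lra].
rewrite ln_sqrt //; have := ln_le hs.
have : 0 < Rsqr (sqrt x - 1) by apply: Rsqr_pos_lt; lra.
have e : sqrt x * sqrt x = x by apply: sqrt_sqrt; lra.
rewrite /Rsqr; nra.
Qed.

Lemma ent0 : ent 0 = 0.
Proof. by rewrite /ent Rmult_0_l. Qed.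

Lemma ent_mul a b : 0 <= a -> 0 <= b -> ent (a * b) = a * ent b + b * ent a.
Proof.
move=> ha hb; rewrite /ent.
case: ha => ha; last by subst; ring.
case: hb => hb; last by subst; ring.
rewrite ln_mult //; ring.
Qed.

Lemma gibbs_term a q : 0 <= a -> 0 <= q -> (0 < a -> 0 < q) -> a - q <= ent a - a * ln q.
Proof.
move=> ha hq hpos; rewrite /ent; case: ha => ha; last by subst; lra.
have hq' := hpos ha.
have := ln_le (Rdiv_lt_0_compat _ _ hq' ha).
rewrite /Rdiv ln_mult ?ln_Rinv //; last by apply: Rinv_0_lt_compat.
move=> h.
have : a * (ln q + - ln a) <= a * (q * / a - 1) by apply: Rmult_le_compat_l; lra.
have -> : a * (q * / a - 1) = q - a by field; lra.
lra.
Qed.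

Lemma gibbs_term_strict a q : 0 <= a -> 0 < q -> a <> q -> a - q < ent a - a * ln q.
Proof.
move=> ha hq hne; rewrite /ent; case: ha => ha; last by subst; lra.
have hne' : q / a <> 1.
  move=> e; apply: hne; have : q = a * (q / a) by field; lra.
  by rewrite e; lra.
have := ln_lt (Rdiv_lt_0_compat _ _ hq ha) hne'.
rewrite /Rdiv ln_mult ?ln_Rinv //; last by apply: Rinv_0_lt_compat.
move=> h.
have : a * (ln q + - ln a) < a * (q * / a - 1) by apply: Rmult_lt_compat_l; lra.
have -> : a * (q * / a - 1) = q - a by field; lra.
lra.
Qed.

Lemma ent_bound u : 0 <= u -> Rabs (ent u) <= 2 * sqrt u + u * u.
Proof.
move=> hu; case: hu => hu; last by subst; rewrite ent0 Rabs_R0 sqrt_0; lra.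
have hs : 0 < sqrt u by apply: sqrt_lt_R0.
have h1 := ln_le hu.
have h2 := ln_le (Rinv_0_lt_compat _ hs).
rewrite ln_Rinv // in h2.
have e : ln u = 2 * ln (sqrt u) by apply: ln_sqrt.
have hsu : sqrt u * sqrt u = u by apply: sqrt_sqrt; lra.
have hinv : u * / sqrt u = sqrt u by rewrite -{1}hsu; field; lra.
rewrite /ent; apply: Rabs_le; split.
  have : u * (- ln (sqrt u)) <= u * (/ sqrt u - 1) by apply: Rmult_le_compat_l; lra.
  rewrite Rmult_minus_distr_l hinv e; nra.
have : u * ln u <= u * (u - 1) by apply: Rmult_le_compat_l; lra.
have : 0 <= sqrt u by lra.
nra.
Qed.

Lemma cont_ln x : 0 < x -> continuity_pt ln x.
Proof.
move=> hx; apply: derivable_continuous_pt.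
by exists (/ x); apply: derivable_pt_lim_ln.
Qed.

Lemma ent_cv (u : nat -> R) l : (forall k, 0 <= u k) -> 0 <= l -> Un_cv u l ->
  Un_cv (fun k => ent (u k)) (ent l).
Proof.
move=> hu hl hcv; case: hl => hl.
  rewrite /ent; apply: CV_mult => //.
  by apply: (continuity_seq ln u l (cont_ln hl) hcv).
subst l; rewrite ent0.
have hs : Un_cv (fun k => sqrt (u k)) 0.
  rewrite -sqrt_0; apply: (continuity_seq sqrt u 0 _ hcv).
  by apply: continuity_pt_sqrt; lra.
have hsq : Un_cv (fun k => u k * u k) 0.
  by rewrite -(Rmult_0_l 0); apply: CV_mult.
move=> e he.
case: (hs (e / 4)) => [|N1 HN1]; first lra.
case: (hsq (e / 4)) => [|N2 HN2]; first lra.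
exists (Nat.max N1 N2) => n hn.
have h1 := HN1 n ltac:(lia). have h2 := HN2 n ltac:(lia).
rewrite /R_dist in h1 h2 *; rewrite ?Rminus_0_r in h1 h2 *.
have := ent_bound (hu n).
have := Rle_abs (sqrt (u n)); have := Rle_abs (u n * u n).
lra.
Qed.

Definition incr (phi : nat -> nat) := forall n, (phi n < phi (S n))%coq_nat.

Lemma incr_ge phi : incr phi -> forall n, (n <= phi n)%coq_nat.
Proof. move=> h; elim=> [|n IH]; [lia | have := h n; lia]. Qed.

Lemma incr_mono phi : incr phi -> forall n m, (n <= m)%coq_nat -> (phi n <= phi m)%coq_nat.
Proof.
move=> h n m; elim: m => [|m IH] hnm; first by have -> : n = 0%nat by lia.
case: (Nat.eq_dec n (S m)) => [->|hne]; first lia.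
have := IH ltac:(lia); have := h m; lia.
Qed.

Lemma incr_comp phi psi : incr phi -> incr psi -> incr (fun n => phi (psi n)).
Proof.
move=> h1 h2 n; have := h2 n => hl.
have := @incr_mono phi h1 (psi n).+1 (psi n.+1) ltac:(lia); have := h1 (psi n); lia.
Qed.

Lemma cv_sub (u : nat -> R) l phi : incr phi -> Un_cv u l -> Un_cv (fun n => u (phi n)) l.
Proof.
move=> hp h e he; case: (h e he) => N HN; exists N => n hn; apply: HN.
have := incr_ge hp n; lia.
Qed.

Lemma small_inv e : 0 < e -> exists N, forall n, (n >= N)%coq_nat -> / INR (S n) < e.
Proof.
move=> he; case: (INR_unbounded (/ e)) => N HN; exists N => n hn.
have hN : 0 < INR N by have := Rinv_0_lt_compat _ he; lra.
have : INR N <= INR (S n) by apply: le_INR; lia.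
move=> hle.
rewrite -(Rinv_inv e); apply: Rinv_lt_contravar.
  by apply: Rmult_lt_0_compat; [apply: Rinv_0_lt_compat|]; lra.
lra.
Qed.

Lemma BW1 (v : nat -> R) : (forall n, 0 <= v n <= 1) ->
  exists phi l, incr phi /\ Un_cv (fun n => v (phi n)) l.
Proof.
move=> hv.
case: (Bolzano_Weierstrass v (fun c => 0 <= c <= 1) (compact_P3 0 1) hv) => l hl.
have hpick : forall k N : nat, exists p, (N <= p)%coq_nat /\ Rabs (v p - l) < / INR (S k).
  move=> k N.
  have hpos : 0 < / INR (S k) by apply: Rinv_0_lt_compat; apply: lt_0_INR; lia.
  case: (hl (disc l (mkposreal _ hpos)) N) => [|p [hp1 hp2]].
    by exists (mkposreal _ hpos) => y hy.
  by exists p; split.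
pose pick k N := proj1_sig (constructive_indefinite_description _ (hpick k N)).
have hpk : forall k N, (N <= pick k N)%coq_nat /\ Rabs (v (pick k N) - l) < / INR (S k).
  by move=> k N; rewrite /pick; case: constructive_indefinite_description.
pose fix phi n := match n with 0 => pick 0%nat 0%nat | S m => pick (S m) (S (phi m)) end.
exists phi, l; split.
  by move=> n /=; have := (hpk n.+1 (phi n).+1).1; lia.
move=> e he; case: (@small_inv _ he) => N HN; exists N => n hn.
have h : Rabs (v (phi n) - l) < / INR (S n).
  by case: n {hn} => [|n] /=; apply: (hpk _ _).2.
rewrite /R_dist; have := HN n hn; lra.
Qed.

Lemma BWfin (X : finType) (u : nat -> X -> R) : (forall n x, 0 <= u n x <= 1) ->
  exists phi p, incr phi /\ forall x, Un_cv (fun n => u (phi n) x) (p x).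
Proof.
move=> hu.
suff: forall s : seq X, exists phi p, incr phi /\ forall x, x \in s -> Un_cv (fun n => u (phi n) x) (p x).
  case/(_ (enum X)) => phi [p [h1 h2]]; exists phi, p; split => // x.
  by apply: h2; rewrite mem_enum.
elim=> [|a s [phi [p [h1 h2]]]].
  by exists id, (fun _ => 0); split => // n /=; lia.
case: (@BW1 (fun n => u (phi n) a)) => [n|psi [l [hpsi hl]]]; first by apply: hu.
exists (fun n => phi (psi n)), (fun x => if x == a then l else p x); split.
  by apply: incr_comp.
move=> x; rewrite inE; case: eqP => [-> _ //|_ /= hx].
by apply: (@cv_sub (fun n => u (phi n) x)) => //; apply: h2.
Qed.

Lemma attain_max (X : finType) (SS : (X -> R) -> Prop) (f : (X -> R) -> R) :
  (forall P, SS P -> forall x, 0 <= P x <= 1) ->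
  (forall (u : nat -> X -> R) P, (forall n, SS (u n)) -> (forall x, Un_cv (fun n => u n x) (P x)) ->
     SS P /\ Un_cv (fun n => f (u n)) (f P)) ->
  (exists P, SS P) -> exists P, SS P /\ forall Q, SS Q -> f Q <= f P.
Proof.
move=> hb hc hne.
have sub : forall u, (forall n, SS (u n)) -> exists phi P, incr phi /\ SS P /\
    Un_cv (fun n => f (u (phi n))) (f P).
  move=> u hu; case: (@BWfin X u) => [n x|phi [P [hphi hP]]]; first by apply: hb.
  have := hc (fun n => u (phi n)) P (fun n => hu _) hP; case=> h1 h2.
  by exists phi, P.
have hbd : exists B, forall P, SS P -> f P <= B.
  apply: NNPP => hnot.
  have hall : forall n : nat, exists P, SS P /\ INR n < f P.
    move=> n; apply: NNPP => hn; apply: hnot; exists (INR n) => P hP.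
    by apply: Rnot_lt_le => hlt; apply: hn; exists P.
  pose u n := proj1_sig (constructive_indefinite_description _ (hall n)).
  have hu : forall n, SS (u n) /\ INR n < f (u n).
    by move=> n; rewrite /u; case: constructive_indefinite_description.
  case: (sub u (fun n => (hu n).1)) => phi [P [hphi [hP hcv]]].
  case: (hcv 1 Rlt_0_1) => N HN.
  case: (INR_unbounded (f P + 1)) => M HM.
  have := HN (Nat.max N M) ltac:(lia); rewrite /R_dist => habs.
  have := (hu (phi (Nat.max N M))).2.
  have : INR M <= INR (phi (Nat.max N M)) by apply: le_INR; have := incr_ge hphi (Nat.max N M); lia.
  have := Rle_abs (f (u (phi (Nat.max N M))) - f P).
  lra.
case: hbd => B hB.
pose E y := exists P, SS P /\ y = f P.
have hEb : bound E by exists B => y [P [hP ->]]; apply: hB.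
have hEn : exists y, E y by case: hne => P hP; exists (f P); exists P.
case: (completeness E hEb hEn) => M [hM1 hM2].
have hall : forall n : nat, exists P, SS P /\ M - / INR (S n) < f P.
  move=> n; apply: NNPP => hn.
  have hpos : 0 < / INR (S n) by apply: Rinv_0_lt_compat; apply: lt_0_INR; lia.
  have : M <= M - / INR (S n); last by lra.
  apply: hM2 => y [P [hP ->]]; apply: Rnot_lt_le => hlt; apply: hn; exists P; split => //.
pose u n := proj1_sig (constructive_indefinite_description _ (hall n)).
have hu : forall n, SS (u n) /\ M - / INR (S n) < f (u n).
  by move=> n; rewrite /u; case: constructive_indefinite_description.
case: (sub u (fun n => (hu n).1)) => phi [P [hphi [hP hcv]]].
exists P; split => // Q hQ.
have hfQ : f Q <= M by apply: hM1; exists Q.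
suff : M <= f P by lra.
apply: Rnot_lt_le => hlt.
have he : 0 < (M - f P) / 2 by lra.
case: (hcv _ he) => N1 HN1.
case: (@small_inv _ he) => N2 HN2.
pose n := Nat.max N1 N2.
have h1 := HN1 n ltac:(lia); rewrite /R_dist in h1.
have h2 := (hu (phi n)).2.
have h3 : / INR (S (phi n)) < (M - f P) / 2 by apply: HN2; have := incr_ge hphi n; lia.
have := Rle_abs (f (u (phi n)) - f P).
lra.
Qed.

Lemma attain_min (X : finType) (SS : (X -> R) -> Prop) (f : (X -> R) -> R) :
  (forall P, SS P -> forall x, 0 <= P x <= 1) ->
  (forall (u : nat -> X -> R) P, (forall n, SS (u n)) -> (forall x, Un_cv (fun n => u n x) (P x)) ->
     SS P /\ Un_cv (fun n => f (u n)) (f P)) ->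
  (exists P, SS P) -> exists P, SS P /\ forall Q, SS Q -> f P <= f Q.
Proof.
move=> hb hc hne.
case: (@attain_max X SS (fun P => - f P) hb _ hne) => [u P hu hP|P [hP h]].
  case: (hc u P hu hP) => h1 h2; split => //.
  by apply: CV_opp.
by exists P; split => // Q hQ; have := h Q hQ; lra.
Qed.

Lemma rsum_scal_r (T : finType) (c : R) (f : T -> R) : rsum (fun t => f t * c) = rsum f * c.
Proof. by rewrite Rmult_comm -rsum_scal; apply: rsum_ext => t; ring. Qed.

Section Channel.
Variables (X Y : finType) (W : X -> Y -> R).
Hypothesis hW : is_channel W.

Lemma W_ge0 x y : 0 <= W x y.
Proof. exact: (hW x).1. Qed.

Lemma W_sum x : rsum (W x) = 1.
Proof. exact: (hW x).2. Qed.

Lemma dist_le1 (T : finType) (P : T -> R) t : is_dist P -> 0 <= P t <= 1.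
Proof. by case=> h1 h2; split => //; rewrite -h2; apply: rsum_term. Qed.

Lemma outd_ge0 P y : (forall x, 0 <= P x) -> 0 <= outd P W y.
Proof. move=> hP; apply: rsum_ge0 => x; apply: Rmult_le_pos => //; apply: W_ge0. Qed.

Lemma outd_pos P x y : (forall x, 0 <= P x) -> 0 < P x -> 0 < W x y -> 0 < outd P W y.
Proof.
move=> hP hx hy; apply: (Rlt_le_trans _ (P x * W x y)); first by apply: Rmult_lt_0_compat.
apply: (@rsum_term _ (fun x => P x * W x y)) => t.
by apply: Rmult_le_pos => //; apply: W_ge0.
Qed.

Lemma outd_sum P : is_dist P -> rsum (outd P W) = 1.
Proof.
case=> h1 h2; rewrite /outd rsum_exchange -h2; apply: rsum_ext => x.
by rewrite rsum_scal W_sum Rmult_1_r.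
Qed.

Definition cW x := rsum (fun y => ent (W x y)).

Lemma mutinf_formula P : (forall x, 0 <= P x) ->
  mutinf P W = rsum (fun x => P x * cW x) - rsum (fun y => ent (outd P W y)).
Proof.
move=> hP; rewrite /mutinf /relent.
have e1 : forall x, P x * rsum (fun y => W x y * ln (W x y / outd P W y)) =
   P x * cW x - rsum (fun y => P x * W x y * ln (outd P W y)).
  move=> x; rewrite /cW -!rsum_scal -rsum_sub; apply: rsum_ext => y.
  case: (W_ge0 x y) => hw; last by rewrite -hw /ent; ring.
  case: (hP x) => hp; last by rewrite -hp; ring.
  have hq := outd_pos hP hp hw.
  rewrite /ent /Rdiv ln_mult ?ln_Rinv //; last by apply: Rinv_0_lt_compat.
  ring.
rewrite (rsum_ext e1) rsum_sub; congr (_ - _).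
rewrite rsum_exchange; apply: rsum_ext => y.
by rewrite rsum_scal_r.
Qed.

End Channel.

Lemma dist_cv (T : finType) (u : nat -> T -> R) P :
  (forall n, is_dist (u n)) -> (forall t, Un_cv (fun n => u n t) (P t)) -> is_dist P.
Proof.
move=> hu hc; split.
  move=> t; apply: Rnot_lt_le => hlt.
  case: (hc t (- P t)) => [|N HN]; first lra.
  have := HN N (le_n _); rewrite /R_dist => h.
  have := (hu N).1 t; have := Rle_abs (u N t - P t); have := Rabs_def2 _ _ h; lra.
apply: (UL_sequence (fun n => rsum (u n))); first by apply: rsum_cv.
have -> : (fun n => rsum (u n)) = (fun _ => 1).
  by apply: functional_extensionality => n; apply: (hu n).2.
by move=> e he; exists 0%nat => n _; rewrite /R_dist Rminus_eq_0 Rabs_R0.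
Qed.

Lemma mutinf_cv (X Y : finType) (W : X -> Y -> R) (u : nat -> X -> R) P :
  is_channel W -> (forall n, is_dist (u n)) -> is_dist P ->
  (forall x, Un_cv (fun n => u n x) (P x)) ->
  Un_cv (fun n => mutinf (u n) W) (mutinf P W).
Proof.
move=> hW hu hP hc.
rewrite mutinf_formula //; last by case: hP.
apply: (@cv_ext (fun n => rsum (fun x => u n x * cW W x) - rsum (fun y => ent (outd (u n) W y)))).
  by move=> n; rewrite mutinf_formula //; case: (hu n).
apply: CV_minus.
  apply: rsum_cv => x; apply: CV_mult => //.
  by move=> e he; exists 0%nat => n _; rewrite /R_dist Rminus_eq_0 Rabs_R0.
apply: rsum_cv => y; apply: ent_cv.
- by move=> n; apply: outd_ge0 => //; case: (hu n).
- by apply: outd_ge0 => //; case: hP.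
apply: rsum_cv => x; apply: CV_mult => //.
by move=> e he; exists 0%nat => n _; rewrite /R_dist Rminus_eq_0 Rabs_R0.
Qed.

Lemma eps_max (S : R -> Prop) m : is_max S m -> epsilon (inhabits 0) (is_max S) = m.
Proof.
move=> hm; have := epsilon_spec (inhabits 0) (is_max S) (ex_intro _ m hm).
case=> h1 h2; case: hm => h3 h4; have := h2 _ h3; have := h4 _ h1; lra.
Qed.

Lemma eps_min (S : R -> Prop) m : is_min S m -> epsilon (inhabits 0) (is_min S) = m.
Proof.
move=> hm; have := epsilon_spec (inhabits 0) (is_min S) (ex_intro _ m hm).
case=> h1 h2; case: hm => h3 h4; have := h2 _ h3; have := h4 _ h1; lra.
Qed.

Lemma delta_dist (T : finType) (t0 : T) : is_dist (fun t => if t == t0 then 1 else 0).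
Proof.
split; first by move=> t; case: (t == t0); lra.
exact: rsum_delta.
Qed.

Lemma cap_exists (X Y : finType) (x0 : X) (W : X -> Y -> R) : is_channel W ->
  exists Ps, is_dist Ps /\ capacity W = mutinf Ps W /\
    forall P, is_dist P -> mutinf P W <= capacity W.
Proof.
move=> hW.
case: (@attain_max X (@is_dist X) (fun P => mutinf P W)).
- by move=> P hP x; apply: dist_le1.
- move=> u P hu hc; have hP := dist_cv hu hc; split => //.
  exact: mutinf_cv.
- by exists (fun t => if t == x0 then 1 else 0); apply: delta_dist.
move=> Ps [hPs hmax].
have hc : capacity W = mutinf Ps W.
  apply: eps_max; split; first by exists Ps.
  by move=> s [P [hP ->]]; apply: hmax.
by exists Ps; split => //; split => // P hP; rewrite hc; apply: hmax.
Qed.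

Lemma ent_convex a b : 0 <= a -> 0 <= b ->
  0 <= ent a + ent b - 2 * ent ((a + b) / 2) /\ (a <> b -> 0 < ent a + ent b - 2 * ent ((a + b) / 2)).
Proof.
move=> ha hb; set m := (a + b) / 2.
have hm : 0 <= m by rewrite /m; lra.
have e : 2 * ent m = (a + b) * ln m by rewrite /ent /m; field.
case: hm => hm; last first.
  have ha0 : a = 0 by rewrite /m in hm; lra.
  have hb0 : b = 0 by rewrite /m in hm; lra.
  by subst; rewrite ent0; split; [lra | move=> h; exfalso; apply: h].
have g1 := gibbs_term ha (Rlt_le _ _ hm) (fun _ => hm).
have g2 := gibbs_term hb (Rlt_le _ _ hm) (fun _ => hm).
rewrite e; split; first by rewrite /m in g1 g2 *; lra.
move=> hab.
case: (Req_dec a m) => ham.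
  have hbm : b <> m by rewrite /m in ham *; lra.
  have g3 := gibbs_term_strict hb hm hbm; rewrite /m in g1 g3 *; lra.
have g3 := gibbs_term_strict ha hm ham; rewrite /m in g3 g2 *; lra.
Qed.

Lemma outd_unique (X Y : finType) (W : X -> Y -> R) P1 P2 : is_channel W ->
  (forall P, is_dist P -> mutinf P W <= capacity W) ->
  is_dist P1 -> is_dist P2 -> mutinf P1 W = capacity W -> mutinf P2 W = capacity W ->
  forall y, outd P1 W y = outd P2 W y.
Proof.
move=> hW hmax h1 h2 e1 e2 y; apply: NNPP => hne.
pose Pm x := (P1 x + P2 x) / 2.
have hPm : is_dist Pm.
  case: h1 => a1 b1; case: h2 => a2 b2; split.
    by move=> x; rewrite /Pm; have := a1 x; have := a2 x; lra.
  rewrite /Pm /Rdiv rsum_scal_r rsum_add b1 b2; lra.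
have hout : forall y, outd Pm W y = (outd P1 W y + outd P2 W y) / 2.
  move=> z; rewrite /outd /Pm /Rdiv -rsum_add -rsum_scal_r; apply: rsum_ext => x; ring.
have := hmax _ hPm.
rewrite (mutinf_formula hW) ?(proj1 hPm) //.
have f1 := mutinf_formula hW (proj1 h1); have f2 := mutinf_formula hW (proj1 h2).
rewrite e1 in f1; rewrite e2 in f2.
have hc : rsum (fun x => Pm x * cW W x) =
   (rsum (fun x => P1 x * cW W x) + rsum (fun x => P2 x * cW W x)) / 2.
  rewrite /Pm /Rdiv -rsum_add -rsum_scal_r; apply: rsum_ext => x; ring.
have hlt : 2 * rsum (fun y => ent (outd Pm W y)) <
   rsum (fun y => ent (outd P1 W y)) + rsum (fun y => ent (outd P2 W y)).
  rewrite -rsum_scal -rsum_add; apply: (@rsum_lt _ _ _ y) => [z|]; rewrite hout.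
    have := ent_convex (outd_ge0 hW z (proj1 h1)) (outd_ge0 hW z (proj1 h2)); lra.
  have := ent_convex (outd_ge0 hW y (proj1 h1)) (outd_ge0 hW y (proj1 h2)).
  case=> _ /(_ hne); lra.
lra.
exact: (proj1 hPm).
Qed.

Definition marg1 (A B : finType) (P : (A * B)%type -> R) (a : A) := rsum (fun b => P (a, b)).
Definition marg2 (A B : finType) (P : (A * B)%type -> R) (b : B) := rsum (fun a => P (a, b)).
Definition prodd (A B : finType) (P1 : A -> R) (P2 : B -> R) (p : (A * B)%type) := P1 p.1 * P2 p.2.

Lemma marg1_dist (A B : finType) (P : (A * B)%type -> R) : is_dist P -> is_dist (marg1 P).
Proof.
case=> h1 h2; split; first by move=> a; apply: rsum_ge0 => b; apply: h1.
by rewrite -h2 rsum_pair.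
Qed.

Lemma marg2_dist (A B : finType) (P : (A * B)%type -> R) : is_dist P -> is_dist (marg2 P).
Proof.
case=> h1 h2; split; first by move=> a; apply: rsum_ge0 => b; apply: h1.
by rewrite -h2 rsum_pair /marg2 rsum_exchange.
Qed.

Lemma prodd_dist (A B : finType) (P1 : A -> R) (P2 : B -> R) :
  is_dist P1 -> is_dist P2 -> is_dist (prodd P1 P2).
Proof.
case=> a1 b1 [a2 b2]; split; first by move=> [a b]; apply: Rmult_le_pos.
rewrite rsum_pair /prodd /= -b1; apply: rsum_ext => a.
by rewrite rsum_scal b2 Rmult_1_r.
Qed.

Lemma marg1_prodd (A B : finType) (P1 : A -> R) (P2 : B -> R) :
  is_dist P2 -> marg1 (prodd P1 P2) = P1.
Proof.
case=> _ h; apply: functional_extensionality => a.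
by rewrite /marg1 /prodd /= rsum_scal h Rmult_1_r.
Qed.

Lemma marg2_prodd (A B : finType) (P1 : A -> R) (P2 : B -> R) :
  is_dist P1 -> marg2 (prodd P1 P2) = P2.
Proof.
case=> _ h; apply: functional_extensionality => b.
by rewrite /marg2 /prodd /= rsum_scal_r h Rmult_1_l.
Qed.

Lemma gibbs_joint (A B : finType) (J : (A * B)%type -> R) :
  is_dist J ->
  rsum (fun a => ent (marg1 J a)) + rsum (fun b => ent (marg2 J b)) <= rsum (fun p => ent (J p)).
Proof.
move=> hJ; have [h0 h1] := hJ.
have hm1 := marg1_dist hJ; have hm2 := marg2_dist hJ.
have key : forall p, J p - marg1 J p.1 * marg2 J p.2 <=
    ent (J p) - J p * ln (marg1 J p.1) - J p * ln (marg2 J p.2).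
  move=> [a b] /=.
  case: (h0 (a, b)) => hp; last by rewrite -hp ent0; have := Rmult_le_pos _ _ ((proj1 hm1) a) ((proj1 hm2) b); lra.
  have l1 : J (a, b) <= marg1 J a by apply: (@rsum_term _ (fun b => J (a, b))) => t.
  have l2 : J (a, b) <= marg2 J b by apply: (@rsum_term _ (fun a => J (a, b))) => t.
  have := @gibbs_term (J (a, b)) (marg1 J a * marg2 J b) (h0 _).
  move=> /(_ _ _) g.
  have e : J (a, b) * ln (marg1 J a * marg2 J b) = J (a, b) * ln (marg1 J a) + J (a, b) * ln (marg2 J b)
    by rewrite ln_mult; [ring|lra|lra].
  have := g ltac:(apply: Rmult_le_pos; lra) ltac:(move=> _; apply: Rmult_lt_0_compat; lra).
  lra.
have := rsum_le key.
rewrite !rsum_sub.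
have e1 : rsum (fun p => J p * ln (marg1 J p.1)) = rsum (fun a => ent (marg1 J a)).
  rewrite rsum_pair; apply: rsum_ext => a /=; by rewrite rsum_scal_r.
have e2 : rsum (fun p => J p * ln (marg2 J p.2)) = rsum (fun b => ent (marg2 J b)).
  rewrite rsum_pair rsum_exchange; apply: rsum_ext => b /=; by rewrite rsum_scal_r.
have e3 : rsum (fun p => marg1 J p.1 * marg2 J p.2) = 1.
  rewrite rsum_pair -(proj2 hm1); apply: rsum_ext => a /=.
  by rewrite rsum_scal (proj2 hm2) Rmult_1_r.
rewrite e1 e2 e3 h1; lra.
Qed.

Lemma rsum_sep (A B : finType) (f : A -> R) (g : B -> R) :
  rsum (fun p : (A * B)%type => f p.1 * g p.2) = rsum f * rsum g.
Proof.
rewrite rsum_pair -rsum_scal_r; apply: rsum_ext => a /=.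
by rewrite rsum_scal.
Qed.

Lemma rsum_sep' (A B : finType) (f : A -> R) (g : B -> R) :
  rsum (fun p : (A * B)%type => g p.2 * f p.1) = rsum f * rsum g.
Proof. by rewrite -rsum_sep; apply: rsum_ext => p; ring. Qed.

Section Prod.
Variables (X Y X' Y' : finType) (W : X -> Y -> R) (W' : X' -> Y' -> R).
Hypotheses (hW : is_channel W) (hW' : is_channel W').
Notation Wp := (prod_channel W W').

Lemma prod_ok : is_channel Wp.
Proof.
move=> [x x']; split.
  by move=> [y y']; rewrite /prod_channel /=; apply: Rmult_le_pos; apply: W_ge0.
rewrite rsum_pair /prod_channel /= -(W_sum hW x); apply: rsum_ext => y.
by rewrite rsum_scal (W_sum hW') Rmult_1_r.
Qed.

Lemma outd_marg1 P y : outd (marg1 P) W y = marg1 (outd P Wp) y.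
Proof.
rewrite /marg1 /outd rsum_exchange rsum_pair; apply: rsum_ext => x.
rewrite -rsum_scal_r; apply: rsum_ext => x'.
rewrite /prod_channel /=.
have -> : rsum (fun a => P (x, x') * (W x y * W' x' a)) = P (x, x') * W x y * rsum (W' x').
  by rewrite -rsum_scal; apply: rsum_ext => a; ring.
by rewrite (W_sum hW') Rmult_1_r.
Qed.

Lemma outd_marg2 P y' : outd (marg2 P) W' y' = marg2 (outd P Wp) y'.
Proof.
rewrite /marg2 /outd rsum_exchange rsum_pair rsum_exchange; apply: rsum_ext => x'.
rewrite -rsum_scal_r; apply: rsum_ext => x.
rewrite /prod_channel /=.
have -> : rsum (fun y => P (x, x') * (W x y * W' x' y')) = P (x, x') * W' x' y' * rsum (W x).
  by rewrite -rsum_scal; apply: rsum_ext => y; ring.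
by rewrite (W_sum hW) Rmult_1_r.
Qed.

Lemma outd_prodd P1 P2 p : outd (prodd P1 P2) Wp p = outd P1 W p.1 * outd P2 W' p.2.
Proof.
rewrite /outd rsum_pair -rsum_scal_r; apply: rsum_ext => x.
rewrite -rsum_scal; apply: rsum_ext => x'.
rewrite /prodd /prod_channel /=; ring.
Qed.

Lemma cW_prod x x' : cW Wp (x, x') = cW W x + cW W' x'.
Proof.
rewrite /cW rsum_pair /prod_channel /=.
have e : forall y, rsum (fun y' => ent (W x y * W' x' y')) = W x y * cW W' x' + ent (W x y).
  move=> y; rewrite /cW.
  have -> : rsum (fun y' => ent (W x y * W' x' y')) =
      rsum (fun y' => W x y * ent (W' x' y') + W' x' y' * ent (W x y)).
    by apply: rsum_ext => y'; rewrite ent_mul //; apply: W_ge0.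
  by rewrite rsum_add rsum_scal rsum_scal_r (W_sum hW') Rmult_1_l.
rewrite (rsum_ext e) rsum_add rsum_scal_r (W_sum hW) Rmult_1_l; rewrite /cW; ring.
Qed.

Lemma lin_prod P : rsum (fun p => P p * cW Wp p) =
  rsum (fun x => marg1 P x * cW W x) + rsum (fun x' => marg2 P x' * cW W' x').
Proof.
have -> : rsum (fun p => P p * cW Wp p) = rsum (fun p => P p * cW W p.1 + P p * cW W' p.2).
  by apply: rsum_ext => -[x x']; rewrite cW_prod /=; ring.
rewrite rsum_add !rsum_pair /marg1 /marg2; congr (_ + _).
  by apply: rsum_ext => x; rewrite /= rsum_scal_r.
by rewrite rsum_exchange; apply: rsum_ext => x'; rewrite /= rsum_scal_r.
Qed.

Lemma outd_dist P : is_dist P -> is_dist (outd P Wp).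
Proof.
move=> hP; split; first by move=> p; apply: outd_ge0 => //; [apply: prod_ok | case: hP].
by apply: outd_sum => //; apply: prod_ok.
Qed.

Lemma mutinf_prod_le P : is_dist P -> mutinf P Wp <= mutinf (marg1 P) W + mutinf (marg2 P) W'.
Proof.
move=> hP.
rewrite (mutinf_formula prod_ok (proj1 hP)).
rewrite (mutinf_formula hW (proj1 (marg1_dist hP))) (mutinf_formula hW' (proj1 (marg2_dist hP))).
rewrite lin_prod.
under (@rsum_ext Y) => y do rewrite outd_marg1.
under (@rsum_ext Y') => y' do rewrite outd_marg2.
have := gibbs_joint (outd_dist hP); lra.
Qed.

Lemma mutinf_prodd P1 P2 : is_dist P1 -> is_dist P2 ->
  mutinf (prodd P1 P2) Wp = mutinf P1 W + mutinf P2 W'.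
Proof.
move=> h1 h2; have hP := prodd_dist h1 h2.
rewrite (mutinf_formula prod_ok (proj1 hP)) (mutinf_formula hW (proj1 h1)) (mutinf_formula hW' (proj1 h2)).
rewrite lin_prod marg1_prodd // marg2_prodd //.
have -> : rsum (fun p => ent (outd (prodd P1 P2) Wp p)) =
   rsum (fun p => outd P1 W p.1 * ent (outd P2 W' p.2) + outd P2 W' p.2 * ent (outd P1 W p.1)).
  apply: rsum_ext => p; rewrite outd_prodd ent_mul //; apply: outd_ge0 => //; [exact: (proj1 h1)|exact: (proj1 h2)].
rewrite rsum_add (rsum_sep (outd P1 W) (fun y => ent (outd P2 W' y))) (rsum_sep' (fun y => ent (outd P1 W y)) (outd P2 W')) (outd_sum hW h1) (outd_sum hW' h2); ring.
Qed.


End Prod.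

Lemma lin_marg (A B : finType) (P : (A * B)%type -> R) (f : A -> R) (g : B -> R) :
  rsum (fun p => P p * (f p.1 + g p.2)) =
  rsum (fun a => marg1 P a * f a) + rsum (fun b => marg2 P b * g b).
Proof.
have -> : rsum (fun p => P p * (f p.1 + g p.2)) = rsum (fun p => P p * f p.1 + P p * g p.2).
  by apply: rsum_ext => p; ring.
rewrite rsum_add !rsum_pair /marg1 /marg2; congr (_ + _).
  by apply: rsum_ext => x; rewrite /= rsum_scal_r.
by rewrite rsum_exchange; apply: rsum_ext => x'; rewrite /= rsum_scal_r.
Qed.

Section Var.
Variables (A B : finType) (w q1 : A -> R) (w' q2 : B -> R).
Hypotheses (hw : is_dist w) (hw' : is_dist w').
Hypotheses (hq1 : forall a, 0 < w a -> 0 < q1 a) (hq2 : forall b, 0 < w' b -> 0 < q2 b).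

Let wq (p : (A * B)%type) := w p.1 * w' p.2.
Let qq (p : (A * B)%type) := q1 p.1 * q2 p.2.
Let r1 a := ln (w a / q1 a).
Let r2 b := ln (w' b / q2 b).

Lemma ln_split p : wq p = 0 \/ ln (wq p / qq p) = r1 p.1 + r2 p.2.
Proof.
rewrite /wq /qq /r1 /r2; case: p => a b /=.
case: ((proj1 hw) a) => ha; last by left; rewrite -ha; ring.
case: ((proj1 hw') b) => hb; last by left; rewrite -hb; ring.
right; have h1 := hq1 ha; have h2 := hq2 hb.
have -> : w a * w' b / (q1 a * q2 b) = (w a / q1 a) * (w' b / q2 b) by field; lra.
by rewrite ln_mult //; apply: Rdiv_lt_0_compat.
Qed.

Lemma term_eq (g : R -> R) p : wq p * g (ln (wq p / qq p)) = wq p * g (r1 p.1 + r2 p.2).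
Proof. by case: (ln_split p) => ->; [ring|]. Qed.

Lemma relent_prod : relent wq qq = relent w q1 + relent w' q2.
Proof.
rewrite /relent (rsum_ext (term_eq id)).
have -> : rsum (fun p => wq p * id (r1 p.1 + r2 p.2)) =
   rsum (fun p => (w p.1 * r1 p.1) * w' p.2) + rsum (fun p => w p.1 * (w' p.2 * r2 p.2)).
  by rewrite -rsum_add; apply: rsum_ext => p; rewrite /wq /id; ring.
rewrite (rsum_sep (fun a => w a * r1 a) w') (rsum_sep w (fun b => w' b * r2 b)).
by rewrite (proj2 hw) (proj2 hw') /r1 /r2; ring.
Qed.

Lemma var_prod :
  rsum (fun p => wq p * (ln (wq p / qq p) - relent wq qq) ^ 2) =
  rsum (fun a => w a * (ln (w a / q1 a) - relent w q1) ^ 2) +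
  rsum (fun b => w' b * (ln (w' b / q2 b) - relent w' q2) ^ 2).
Proof.
rewrite relent_prod.
set D1 := relent w q1; set D2 := relent w' q2.
rewrite (rsum_ext (term_eq (fun t => (t - (D1 + D2)) ^ 2))).
have -> : rsum (fun p => wq p * (r1 p.1 + r2 p.2 - (D1 + D2)) ^ 2) =
   rsum (fun p => (w p.1 * (r1 p.1 - D1) ^ 2) * w' p.2) +
   rsum (fun p => w p.1 * (w' p.2 * (r2 p.2 - D2) ^ 2)) +
   2 * rsum (fun p => (w p.1 * (r1 p.1 - D1)) * (w' p.2 * (r2 p.2 - D2))).
  by rewrite -rsum_scal -!rsum_add; apply: rsum_ext => p; rewrite /wq; ring.
rewrite (rsum_sep (fun a => w a * (r1 a - D1) ^ 2) w') (rsum_sep w (fun b => w' b * (r2 b - D2) ^ 2)).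
rewrite (rsum_sep (fun a => w a * (r1 a - D1)) (fun b => w' b * (r2 b - D2))).
have z1 : rsum (fun a => w a * (r1 a - D1)) = 0.
  have -> : rsum (fun a => w a * (r1 a - D1)) = rsum (fun a => w a * r1 a) - rsum w * D1.
    by rewrite -rsum_scal_r -rsum_sub; apply: rsum_ext => a; ring.
  by rewrite (proj2 hw) /D1 /relent /r1; ring.
rewrite z1 (proj2 hw) (proj2 hw') /r1 /r2; ring.
Qed.

End Var.

Lemma const_cv c : Un_cv (fun _ : nat => c) c.
Proof. by move=> e he; exists 0%nat => n _; rewrite /R_dist Rminus_eq_0 Rabs_R0. Qed.

Section Single.
Variables (X Y : finType) (x0 : X) (W : X -> Y -> R).
Hypothesis hW : is_channel W.

Lemma disp_closed (u : nat -> X -> R) P :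
  (forall n, cap_achieving W (u n)) -> (forall x, Un_cv (fun n => u n x) (P x)) ->
  cap_achieving W P /\ Un_cv (fun n => dispersion (u n) W) (dispersion P W).
Proof.
move=> hu hc.
case: (cap_exists x0 hW) => Ps [hPs [hcap hmax]].
have hP : is_dist P by apply: (dist_cv (fun n => (hu n).1)).
have hPa : cap_achieving W P.
  split => //; apply: (UL_sequence (fun n => mutinf (u n) W)).
    by apply: mutinf_cv => // n; case: (hu n).
  apply: (@cv_ext (fun _ => capacity W)); last by apply: const_cv.
  by move=> n; rewrite (hu n).2.
split => //.
have e : forall n, outd (u n) W = outd P W.
  move=> n; apply: functional_extensionality => y.
  by apply: (outd_unique hW hmax) => //; [case: (hu n)|case: (hu n)|case: hPa].
apply: (@cv_ext (fun n => rsum (fun x => u n x * rsum (fun y =>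
     W x y * (ln (W x y / outd P W y) - relent (W x) (outd P W)) ^ 2)))).
  by move=> n; rewrite /dispersion e.
rewrite /dispersion; apply: rsum_cv => x; apply: CV_mult => //; exact: const_cv.
Qed.

Lemma Vplus_attained : exists Pp, cap_achieving W Pp /\ Vplus W = dispersion Pp W /\
  forall P, cap_achieving W P -> dispersion P W <= dispersion Pp W.
Proof.
case: (cap_exists x0 hW) => Ps [hPs [hcap hmax]].
case: (@attain_max X (cap_achieving W) (fun P => dispersion P W)).
- by move=> P [hP _] x; apply: dist_le1.
- by move=> u P hu hc; apply: disp_closed.
- by exists Ps; split.
move=> Pp [hPp hm]; exists Pp; split => //; split => //.
apply: eps_max; split; first by exists Pp.
by move=> s [P [hP ->]]; apply: hm.
Qed.

Lemma Vminus_attained : exists Pp, cap_achieving W Pp /\ Vminus W = dispersion Pp W /\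
  forall P, cap_achieving W P -> dispersion Pp W <= dispersion P W.
Proof.
case: (cap_exists x0 hW) => Ps [hPs [hcap hmax]].
case: (@attain_min X (cap_achieving W) (fun P => dispersion P W)).
- by move=> P [hP _] x; apply: dist_le1.
- by move=> u P hu hc; apply: disp_closed.
- by exists Ps; split.
move=> Pp [hPp hm]; exists Pp; split => //; split => //.
apply: eps_min; split; first by exists Pp.
by move=> s [P [hP ->]]; apply: hm.
Qed.

End Single.

Section Main.
Variables (X Y X' Y' : finType) (x0 : X) (x0' : X') (W : X -> Y -> R) (W' : X' -> Y' -> R).
Hypotheses (hW : is_channel W) (hW' : is_channel W').
Notation Wp := (prod_channel W W').

Lemma capp : capacity Wp = capacity W + capacity W' /\
  forall P, is_dist P -> mutinf P Wp <= capacity Wp.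
Proof.
case: (cap_exists x0 hW) => P1 [h1 [c1 m1]].
case: (cap_exists x0' hW') => P2 [h2 [c2 m2]].
have e : capacity Wp = capacity W + capacity W'.
  apply: eps_max; split.
    by exists (prodd P1 P2); split; [apply: prodd_dist | rewrite mutinf_prodd // c1 c2].
  move=> s [P [hP ->]].
  have := mutinf_prod_le hW hW' hP.
  have := m1 _ (marg1_dist hP); have := m2 _ (marg2_dist hP); lra.
split => // P hP; rewrite e.
have := mutinf_prod_le hW hW' hP.
have := m1 _ (marg1_dist hP); have := m2 _ (marg2_dist hP); lra.
Qed.

Lemma ach_marg P : cap_achieving Wp P ->
  cap_achieving W (marg1 P) /\ cap_achieving W' (marg2 P).
Proof.
case=> hP hI.
case: (cap_exists x0 hW) => P1 [h1 [c1 m1]].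
case: (cap_exists x0' hW') => P2 [h2 [c2 m2]].
have := mutinf_prod_le hW hW' hP; rewrite hI (proj1 capp).
have := m1 _ (marg1_dist hP); have := m2 _ (marg2_dist hP) => a b c.
split; (split; [by apply: marg1_dist || apply: marg2_dist | lra]).
Qed.

Lemma disp_decomp P : cap_achieving Wp P ->
  dispersion P Wp = dispersion (marg1 P) W + dispersion (marg2 P) W'.
Proof.
move=> hPa; have [hP hI] := hPa.
have [[hP1 hI1] [hP2 hI2]] := ach_marg hPa.
set P1 := marg1 P; set P2 := marg2 P.
have hQ : outd P Wp = fun p => outd P1 W p.1 * outd P2 W' p.2.
  apply: functional_extensionality => p; rewrite -outd_prodd.
  apply: (outd_unique (prod_ok hW hW') (proj2 capp)) => //; first by apply: prodd_dist.
  by rewrite mutinf_prodd // hI1 hI2 (proj1 capp).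
rewrite /dispersion hQ -lin_marg; apply: rsum_ext => -[x x'].
case: ((proj1 hP) (x, x')) => hp; last by rewrite -hp !Rmult_0_l.
congr (_ * _).
have hp1 : 0 < P1 x by apply: (Rlt_le_trans _ _ _ hp); apply: (@rsum_term _ (fun b => P (x, b))) => t; apply: (proj1 hP).
have hp2 : 0 < P2 x' by apply: (Rlt_le_trans _ _ _ hp); apply: (@rsum_term _ (fun a => P (a, x'))) => t; apply: (proj1 hP).
exact: (var_prod (hW x) (hW' x') (fun y hy => outd_pos hW (proj1 hP1) hp1 hy)
  (fun y hy => outd_pos hW' (proj1 hP2) hp2 hy)).
Qed.

Lemma main_plus : Vplus Wp = Vplus W + Vplus W'.
Proof.
case: (Vplus_attained x0 hW) => Q1 [a1 [e1 m1]].
case: (Vplus_attained x0' hW') => Q2 [a2 [e2 m2]].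
rewrite e1 e2; apply: eps_max; split.
  exists (prodd Q1 Q2).
  have ha : cap_achieving Wp (prodd Q1 Q2).
    split; first by apply: prodd_dist; [exact: (proj1 a1)|exact: (proj1 a2)].
    by rewrite (mutinf_prodd hW hW' (proj1 a1) (proj1 a2)) (proj2 a1) (proj2 a2) (proj1 capp).
  split => //; rewrite disp_decomp // (marg1_prodd _ (proj1 a2)) (marg2_prodd _ (proj1 a1)) //.
move=> s [P [hP ->]]; rewrite disp_decomp //.
have [b1 b2] := ach_marg hP.
have := m1 _ b1; have := m2 _ b2; lra.
Qed.

Lemma main_minus : Vminus Wp = Vminus W + Vminus W'.
Proof.
case: (Vminus_attained x0 hW) => Q1 [a1 [e1 m1]].
case: (Vminus_attained x0' hW') => Q2 [a2 [e2 m2]].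
rewrite e1 e2; apply: eps_min; split.
  exists (prodd Q1 Q2).
  have ha : cap_achieving Wp (prodd Q1 Q2).
    split; first by apply: prodd_dist; [exact: (proj1 a1)|exact: (proj1 a2)].
    by rewrite (mutinf_prodd hW hW' (proj1 a1) (proj1 a2)) (proj2 a1) (proj2 a2) (proj1 capp).
  split => //; rewrite disp_decomp // (marg1_prodd _ (proj1 a2)) (marg2_prodd _ (proj1 a1)) //.
move=> s [P [hP ->]]; rewrite disp_decomp //.
have [b1 b2] := ach_marg hP.
have := m1 _ b1; have := m2 _ b2; lra.
Qed.

End Main.

Unset Implicit Arguments.

Theorem lemma3 (X Y X' Y' : finType) (x0 : X) (x0' : X')
  (W : X -> Y -> R) (W' : X' -> Y' -> R) :
  is_channel W -> is_channel W' ->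
  Vplus (prod_channel W W') = Vplus W + Vplus W' /\
  Vminus (prod_channel W W') = Vminus W + Vminus W'.
Proof.
move=> hW hW'; split; [exact: main_plus | exact: main_minus].
Qed.
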